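(* Let $s>0$ and let $c$ be a constant. Suppose $g\in C^1[s,\infty)$ satisfies $$g'(t)=-g(t)\Big(1+\frac1t\Big)+\frac1t\int_s^t g(\xi)\,d\xi+\frac ct,\qquad t\in[s,\infty).$$ Then for all $t\ge s$, $$g(t)=g'(s)\,s^2\,e^{s}\,I_2(t,s)+g(s),$$ where $g'(s)=c\,s^{-1}-(1+s^{-1})\,g(s)$.
   Context: $I_2(t,s)=\int_s^t \frac{e^{-\xi}}{\xi^2}\,d\xi$. *)

(* Defs.v *)
From Stdlib Require Import Reals.
From Coquelicot Require Import Coquelicot.
Open Scope R_scope.

Definition I2 (t s : R) : R := RInt (fun xi => exp (- xi) / xi ^ 2) s t.

Definition C1_on_from (s : R) (g dg : R -> R) : Prop :=
  (forall t, s < t -> is_derive g t (dg t)) /\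
  filterlim (fun h => (g (s + h) - g s) / h) (at_right 0) (locally (dg s)) /\
  (forall t, s < t -> continuous dg t) /\
  filterlim dg (at_right s) (locally (dg s)).

(* Main.v *)
Require Import Defs.
From Stdlib Require Import Reals Lra.
From Coquelicot Require Import Coquelicot.
Open Scope R_scope.

Lemma const_on (f : R -> R) (a b : R) :
  a <= b ->
  (forall x, a < x < b -> is_derive f x 0) ->
  (forall x, a <= x <= b -> continuous f x) -> f b = f a.
Proof.
  intros hab hd hc.
  destruct (MVT_gen f a b (fun _ => 0)) as [c0 [_ Hc]].
  - intros x; rewrite Rmin_left, Rmax_right by lra. apply hd.
  - intros x; rewrite Rmin_left, Rmax_right by lra. intros hx.
    apply continuity_pt_filterlim. apply hc; exact hx.
  - lra.
Qed.

Lemma cmul (f g : R -> R) x : continuous f x -> continuous g x -> continuous (fun y => f y * g y) x.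
Proof. exact (@continuous_mult R_UniformSpace R_AbsRing f g x). Qed.
Lemma cplus (f g : R -> R) x : continuous f x -> continuous g x -> continuous (fun y => f y + g y) x.
Proof. exact (@continuous_plus R_UniformSpace R_AbsRing R_NormedModule f g x). Qed.
Lemma copp (f : R -> R) x : continuous f x -> continuous (fun y => - f y) x.
Proof. exact (@continuous_opp R_UniformSpace R_AbsRing R_NormedModule f x). Qed.
Lemma cminus (f g : R -> R) x : continuous f x -> continuous g x -> continuous (fun y => f y - g y) x.
Proof. intros. apply cplus; auto. apply copp; auto. Qed.
Lemma cid x : continuous (fun y : R => y) x.
Proof. exact (@continuous_id R_UniformSpace x). Qed.
Lemma cconst (a : R) x : continuous (fun y : R => a) x.
Proof. exact (@continuous_const R_UniformSpace R_UniformSpace a x). Qed.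
Lemma Kcont (u v : R -> R) (c x : R) : continuous u x -> continuous v x ->
  continuous (fun y => y * exp y * (- u y * (y + 1) + v y + c)) x.
Proof.
  intros hu hv.
  assert (he : continuous exp x).
  { apply (@ex_derive_continuous R_AbsRing R_NormedModule). auto_derive. auto. }
  apply cmul. apply cmul. apply cid. exact he.
  apply cplus. apply cplus. apply cmul. apply copp. exact hu.
  apply cplus. apply cid. apply cconst. exact hv. apply cconst.
Qed.
Lemma Lcont (u v : R -> R) (D x : R) : continuous u x -> continuous v x ->
  continuous (fun y => u y - D * v y) x.
Proof.
  intros hu hv. apply cminus. exact hu. apply cmul.
  apply cconst. exact hv.
Qed.
Lemma Kder (u v : R -> R) (du dv c x : R) : is_derive u x du -> is_derive v x dv -> is_derive (fun y => y * exp y * (- u y * (y+1) + v y + c)) x ((exp x + x*exp x)*(-u x*(x+1)+v x+c) + x*exp x*(-du*(x+1) - u x + dv)).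
Proof.
  intros hu hv. auto_derive. split. eexists; exact hu. split. eexists; exact hv. auto.
  replace (Derive (fun x0 => u x0) x) with du by (symmetry; now apply is_derive_unique).
  replace (Derive (fun x0 => v x0) x) with dv by (symmetry; now apply is_derive_unique). ring.
Qed.
Lemma f2cont x : 0 < x -> continuous (fun xi => exp (- xi) / xi ^ 2) x.
Proof. intros hx. apply (@ex_derive_continuous R_AbsRing R_NormedModule). auto_derive. rewrite Rmult_1_r. apply Rmult_integral_contrapositive; lra. Qed.

Lemma ball_R (a e b : R) : ball a e b <-> Rabs (b - a) < e.
Proof. reflexivity. Qed.

Theorem lemma3 (s c : R) (g dg : R -> R) :
  0 < s ->
  C1_on_from s g dg ->
  (forall t, s <= t ->
     dg t = - g t * (1 + 1 / t) + (1 / t) * RInt g s t + c / t) ->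
  dg s = c / s - (1 + / s) * g s /\
  (forall t, s <= t -> g t = dg s * s ^ 2 * exp s * I2 t s + g s).
Proof.
  intros hs [Hd [Hq [Hc Hcs]]] Heq.
  split.
  { rewrite (Heq s (Rle_refl s)), RInt_point. unfold zero; simpl. field. lra. }
  set (gt := fun x => g (Rmax s x)).
  assert (Hgtc : forall x, continuous gt x).
  { intros x. destruct (Rlt_or_le s x) as [hx|hx].
    - apply continuous_ext_loc with g.
      + apply locally_interval with s p_infty; simpl; auto.
        intros y hy _. unfold gt. rewrite Rmax_right by lra. reflexivity.
      + exact (@ex_derive_continuous R_AbsRing R_NormedModule g x (ex_intro _ _ (Hd x hx))).
    - destruct hx as [hx|hx].
      + apply continuous_ext_loc with (fun _ => g s).
        * apply locally_interval with m_infty s; simpl; auto.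
          intros y _ hy. unfold gt. rewrite Rmax_left by lra. reflexivity.
        * apply continuous_const.
      + subst x. intros P [eps HP].
        unfold gt at 1 in HP. rewrite Rmax_left in HP by lra.
        apply filterlim_locally with (eps := mkposreal 1 Rlt_0_1) in Hq.
        destruct Hq as [del Hdel].
        set (M := Rabs (dg s) + 2).
        assert (HM : 0 < M) by (unfold M; pose proof (Rabs_pos (dg s)); lra).
        assert (Hp : 0 < Rmin del (eps / M)).
        { apply Rmin_pos. apply cond_pos. apply Rdiv_lt_0_compat; [apply cond_pos|lra]. }
        exists (mkposreal _ Hp). intros y Hy. apply HP.
        apply ball_R in Hy. change (Rabs (y - s) < Rmin del (eps / M)) in Hy. apply ball_R.
        unfold gt. destruct (Rle_or_lt y s) as [hy|hy].
        * rewrite Rmax_left by lra. rewrite Rminus_eq_0, Rabs_R0. apply cond_pos.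
        * rewrite Rmax_right by lra.
          assert (h1 : Rabs (y - s) < del) by (pose proof (Rmin_l del (eps/M)); lra).
          assert (h2 : Rabs (y - s) < eps / M) by (pose proof (Rmin_r del (eps/M)); lra).
          rewrite Rabs_right in h1, h2 by lra.
          specialize (Hdel (y - s)). simpl in Hdel.
          assert (B : Rabs ((g (s + (y - s)) - g s) / (y - s) - dg s) < 1).
          { apply Hdel. apply ball_R. rewrite Rminus_0_r, Rabs_right by lra; lra. lra. }
          assert (Ey : s + (y - s) = (y:R)) by ring. rewrite Ey in B.
          set (q := (g y - g s) / (y - s)) in B.
          assert (E : g y - g s = q * (y - s)) by (unfold q; field; lra).
          rewrite E, Rabs_mult, (Rabs_right (y - s)) by lra.
          assert (Rabs q <= Rabs (dg s) + 1).
          { replace q with ((q - dg s) + dg s) by ring.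
            pose proof (Rabs_triang (q - dg s) (dg s)). lra. }
          apply Rle_lt_trans with ((Rabs (dg s) + 1) * (y - s)).
          -- apply Rmult_le_compat_r; lra.
          -- apply Rlt_le_trans with (M * (y - s)).
             ++ unfold M. nra.
             ++ apply Rle_trans with (M * (eps / M)).
                ** apply Rmult_le_compat_l; lra.
                ** right. field. lra. }

  assert (HG : forall x, is_derive (fun b => RInt gt s b) x (gt x)).
  { intros x. apply (is_derive_RInt gt (fun b => RInt gt s b) s x).
    - exists (mkposreal 1 Rlt_0_1). intros b _. apply (@RInt_correct R_CompleteNormedModule).
      apply (@ex_RInt_continuous R_CompleteNormedModule). intros z _. apply Hgtc.
    - apply Hgtc. }
  assert (HeqG : forall t, s <= t -> t * dg t = - gt t * (t + 1) + RInt gt s t + c).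
  { intros t ht. rewrite (Heq t ht).
    assert (E : RInt g s t = RInt gt s t).
    { apply RInt_ext. rewrite Rmin_left, Rmax_right by lra. intros x hx.
      unfold gt. rewrite Rmax_right by lra. reflexivity. }
    rewrite E. replace (gt t) with (g t) by (unfold gt; rewrite Rmax_right by lra; reflexivity). field. lra. }
  set (K := fun y => y * exp y * (- gt y * (y + 1) + RInt gt s y + c)).
  assert (HK : forall t, s <= t -> K t = K s).
  { intros t ht. apply const_on; auto.
    - intros x hx. assert (hx1 : s < x) by lra.
      assert (Hgd : is_derive gt x (dg x)).
      { apply is_derive_ext_loc with g.
        + apply locally_interval with s p_infty; simpl; auto.
          intros y hy _. unfold gt. rewrite Rmax_right by lra. reflexivity.
        + apply Hd; lra. }
      pose proof (Kder gt (fun b => RInt gt s b) (dg x) (gt x) c x Hgd (HG x)) as HKd.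
      replace 0 with ((exp x + x * exp x) * (- gt x * (x + 1) + RInt gt s x + c) +
        x * exp x * (- dg x * (x + 1) - gt x + gt x)).
      + exact HKd.
      + rewrite <- (HeqG x) by lra. ring.
    - intros x hx. apply Kcont. apply Hgtc.
      apply (@ex_derive_continuous R_AbsRing R_NormedModule). eexists; apply HG. }
  set (D := dg s * s ^ 2 * exp s).
  assert (Hdg : forall t, s <= t -> dg t = D * (exp (- t) / t ^ 2)).
  { intros t ht. pose proof (HK t ht) as H. unfold K in H.
    rewrite <- (HeqG t ht), <- (HeqG s (Rle_refl s)) in H.
    unfold D. rewrite exp_Ropp.
    assert (exp t > 0) by apply exp_pos.
    assert (E : dg t = (t * exp t * (t * dg t)) / (t ^ 2 * exp t)) by (field; lra).
    rewrite E, H. field. lra. }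
  set (f2 := fun xi => exp (- xi) / xi ^ 2).
  assert (HF : forall x, 0 < x -> is_derive (fun b => RInt f2 s b) x (f2 x)).
  { intros x hx. apply (is_derive_RInt f2 (fun b => RInt f2 s b) s x).
    - apply locally_interval with 0 p_infty; simpl; auto.
      intros b hb _. apply (@RInt_correct R_CompleteNormedModule).
      apply (@ex_RInt_continuous R_CompleteNormedModule). intros z hz. apply f2cont.
      pose proof (Rmin_glb_lt s b 0 hs hb). lra.
    - apply f2cont; exact hx. }
  intros t ht.
  set (L := fun y => gt y - D * RInt f2 s y).
  assert (HL : L t = L s).
  { apply const_on; auto.
    - intros x hx. assert (hx1 : s < x) by lra.
      assert (Hgd : is_derive gt x (dg x)).
      { apply is_derive_ext_loc with g.
        + apply locally_interval with s p_infty; simpl; auto.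
          intros y hy _. unfold gt. rewrite Rmax_right by lra. reflexivity.
        + apply Hd; lra. }
      unfold L. replace 0 with (dg x - D * f2 x).
      + apply (@is_derive_minus R_AbsRing R_NormedModule gt (fun y => D * RInt f2 s y) x (dg x) (D * f2 x)).
        exact Hgd. apply is_derive_scal. apply HF. lra.
      + rewrite (Hdg x) by lra. unfold f2. ring.
    - intros x hx. apply Lcont. apply Hgtc.
      apply (@ex_derive_continuous R_AbsRing R_NormedModule). eexists; apply HF. lra. }
  unfold L in HL. rewrite RInt_point in HL. unfold gt in HL.
  rewrite Rmax_right in HL by lra. rewrite Rmax_left in HL by lra.
  unfold I2. fold f2. unfold zero in HL; simpl in HL.
  fold D. lra.
Qed.
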